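(* Let $A$ be a (not necessarily associative or Lie) algebra over a field $\mathbb{F}$ with product $(x,y)\mapsto xy$. Then the set $\mathrm{BiDer}_r(A)$ of right biderivations of $A$, with pointwise vector space operations and bracket $\{B_1,B_2\}(x,y)=B_1(B_2(x,y),y)-B_2(B_1(x,y),y)$, is a Lie algebra over $\mathbb{F}$.
   Context: A right biderivation of an algebra $A$ is a map $B\colon A\times A\to A$ (not required to be linear in the second argument) which is linear in its first argument and satisfies $B(xy,z)=x\,B(y,z)+B(x,z)\,y$ for all $x,y,z\in A$. *)

(* Defs.v *)
From mathcomp Require Import all_boot all_algebra.
Set Implicit Arguments. Unset Strict Implicit. Unset Printing Implicit Defensive.
Import GRing.Theory.
Local Open Scope ring_scope.

Definition bilinear_product (F : fieldType) (A : lmodType F) (mul : A -> A -> A) :=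
  (forall (a : F) (x x' y : A), mul (a *: x + x') y = a *: mul x y + mul x' y) /\
  (forall (a : F) (x y y' : A), mul x (a *: y + y') = a *: mul x y + mul x y').

Definition right_biderivation (F : fieldType) (A : lmodType F)
    (mul : A -> A -> A) (B : A -> A -> A) :=
  (forall (a : F) (x x' z : A), B (a *: x + x') z = a *: B x z + B x' z) /\
  (forall x y z : A, B (mul x y) z = mul x (B y z) + mul (B x z) y).

Definition bzero (F : fieldType) (A : lmodType F) : A -> A -> A := fun _ _ => 0.
Definition badd (F : fieldType) (A : lmodType F) (B1 B2 : A -> A -> A) : A -> A -> A :=
  fun x y => B1 x y + B2 x y.
Definition bscale (F : fieldType) (A : lmodType F) (a : F) (B : A -> A -> A) : A -> A -> A :=
  fun x y => a *: B x y.

Definition bibracket (F : fieldType) (A : lmodType F) (B1 B2 : A -> A -> A) : A -> A -> A :=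
  fun x y => B1 (B2 x y) y - B2 (B1 x y) y.

(* Main.v *)
Require Import Defs.
From mathcomp Require Import all_boot all_algebra.
From Stdlib Require Import FunctionalExtensionality.
Import GRing.Theory.
Local Open Scope ring_scope.

Section H.
Variables (F : fieldType) (A : lmodType F).
Implicit Types (B : A -> A -> A).

Definition lin1 B := forall (a : F) (x x' z : A), B (a *: x + x') z = a *: B x z + B x' z.

Lemma lin1_0 B z : lin1 B -> B 0 z = 0.
Proof. move=> h; have e : B 0 z + B 0 z = B 0 z + 0.
  by rewrite addr0 -{3}[0](addr0 0) -{3}[0](scale1r 0) h scale1r.
exact: addrI e. Qed.
Lemma lin1_D B x y z : lin1 B -> B (x + y) z = B x z + B y z.
Proof. by move=> h; have := h 1 x y z; rewrite !scale1r. Qed.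
Lemma lin1_Z B a x z : lin1 B -> B (a *: x) z = a *: B x z.
Proof. by move=> h; rewrite -[a *: x]addr0 h lin1_0 // addr0. Qed.
Lemma lin1_N B x z : lin1 B -> B (- x) z = - B x z.
Proof. by move=> h; rewrite -scaleN1r lin1_Z // scaleN1r. Qed.
Lemma lin1_B B x y z : lin1 B -> B (x - y) z = B x z - B y z.
Proof. by move=> h; rewrite lin1_D // lin1_N. Qed.
End H.
Arguments lin1_0 {F A B z}. Arguments lin1_D {F A B x y z}.
Arguments lin1_Z {F A B a x z}. Arguments lin1_N {F A B x z}.
Arguments lin1_B {F A B x y z}.

Lemma zA1 (V : zmodType) (p q r s : V) : p + q - (r + s) = (p - r) + (q - s).
Proof. by rewrite opprD addrACA. Qed.

Lemma zA2 (V : zmodType) (p q r s c1 c2 : V) :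
  (p + c1) + (c2 + r) - ((q + c2) + (c1 + s)) = p - q + (r - s).
Proof.
rewrite !opprD !addrA -(addrA p c1) (addrC c1) !addrA -(addrA _ r) -(addrA _ (- q)).
by rewrite (addrAC (p + c2) c1) (addrAC (p + c2 + _) c1) (addrAC p c2) !addrK (addrC r).
Qed.



Lemma zA3 (V : zmodType) (a b c d e f : V) :
  a - b - (c - d) + (c - e - (f - b)) + (f - d - (a - e)) = 0.
Proof.
rewrite !opprB !addrA subrK subrK.
rewrite (addrAC (a - b + d) (-e) b) (addrAC (a - b) d b) subrK.
rewrite (addrAC (a + d) (-e) (-d)) addrK subrK.
exact: subrr.
Qed.

Theorem mainTheorem6 (F : fieldType) (A : lmodType F) (mul : A -> A -> A) :
  bilinear_product mul ->
  [/\ right_biderivation mul (@bzero F A),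
      (forall B1 B2, right_biderivation mul B1 -> right_biderivation mul B2 ->
         right_biderivation mul (badd B1 B2)),
      (forall (a : F) B, right_biderivation mul B ->
         right_biderivation mul (bscale a B)),
      (forall B1 B2, right_biderivation mul B1 -> right_biderivation mul B2 ->
         right_biderivation mul (bibracket B1 B2)) &
      [/\ (forall (a : F) B1 B1' B2, right_biderivation mul B1 ->
             right_biderivation mul B1' -> right_biderivation mul B2 ->
             bibracket (badd (bscale a B1) B1') B2
             = badd (bscale a (bibracket B1 B2)) (bibracket B1' B2)),
          (forall (a : F) B1 B2 B2', right_biderivation mul B1 ->
             right_biderivation mul B2 -> right_biderivation mul B2' ->
             bibracket B1 (badd (bscale a B2) B2')
             = badd (bscale a (bibracket B1 B2)) (bibracket B1 B2')),
          (forall B, right_biderivation mul B -> bibracket B B = @bzero F A) &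
          (forall B1 B2 B3, right_biderivation mul B1 ->
             right_biderivation mul B2 -> right_biderivation mul B3 ->
             badd (badd (bibracket B1 (bibracket B2 B3))
                        (bibracket B2 (bibracket B3 B1)))
                  (bibracket B3 (bibracket B1 B2)) = @bzero F A)]].
Proof.
move=> [ml mr].
have mlin : @lin1 F A mul by [].
have mD x y z : mul x (y + z) = mul x y + mul x z by have := mr 1 x y z; rewrite !scale1r.
have m0 x : mul x 0 = 0.
  have e : mul x 0 + mul x 0 = mul x 0 + 0 by rewrite addr0 -mD addr0.
  exact: addrI e.
have mN x y : mul x (- y) = - mul x y.
  by rewrite -scaleN1r -[_ *: y]addr0 mr m0 addr0 scaleN1r.
have mB x y z : mul x (y - z) = mul x y - mul x z by rewrite mD mN.
split.
- split; rewrite /bzero; [by move=> *; rewrite scaler0 addr0|].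
  by move=> *; rewrite m0 (lin1_0 mlin) addr0.
- move=> B1 B2 [l1 d1] [l2 d2]; split; rewrite /badd.
    by move=> a x x' z; rewrite l1 l2 scalerDr addrACA.
  by move=> x y z; rewrite d1 d2 mD (lin1_D mlin) addrACA.
- move=> a B [l d]; split; rewrite /bscale.
    by move=> b x x' z; rewrite l scalerDr !scalerA mulrC.
  move=> x y z; rewrite d scalerDr (lin1_Z mlin); congr (_ + _).
  by have := mr a x (B y z) 0; rewrite !addr0 m0 addr0.
- move=> B1 B2 [l1 d1] [l2 d2]; split; rewrite /bibracket.
    move=> a x x' z; rewrite l2 l1 l1 l2 scalerBr. rewrite zA1; reflexivity.
  move=> x y z; rewrite d2 d1 (lin1_D l1) (lin1_D l2) d1 d1 d2 d2.
  rewrite mB (lin1_B mlin).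
  exact: zA2.
split.
- move=> a B1 B1' B2 [l1 d1] [l1' d1'] [l2 d2]; apply: functional_extensionality => x;
  apply: functional_extensionality => y; rewrite /bibracket /badd /bscale.
  rewrite l2 scalerBr; exact: zA1.
- move=> a B1 B2 B2' [l1 d1] [l2 d2] [l2' d2']; apply: functional_extensionality => x;
  apply: functional_extensionality => y; rewrite /bibracket /badd /bscale.
  rewrite l1 scalerBr; exact: zA1.
- move=> B _; apply: functional_extensionality => x;
  apply: functional_extensionality => y; rewrite /bibracket /bzero; exact: subrr.
- move=> B1 B2 B3 [l1 d1] [l2 d2] [l3 d3]; apply: functional_extensionality => x;
  apply: functional_extensionality => y; rewrite /bibracket /badd /bzero.
  rewrite !(lin1_B l1) !(lin1_B l2) !(lin1_B l3).
  exact: zA3.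
Qed.
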